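(* Let $n\ge 3$ and let $\beta\in B_n(D)$ be such that $\pi(\beta)$ is a transposition. Then the subgroup $H_\beta=\langle P_n(D),\beta\rangle$ of $B_n(D)$ is not bi-orderable.
   Context: $B_n(D)$ is the Artin braid group on $n$ strands, with generators $\sigma_1,\dots,\sigma_{n-1}$ and relations $\sigma_i\sigma_j=\sigma_j\sigma_i$ for $|i-j|\ge 2$ and $\sigma_i\sigma_{i+1}\sigma_i=\sigma_{i+1}\sigma_i\sigma_{i+1}$. The permutation homomorphism $\pi: B_n(D)\to S_n$ is given by $\pi(\sigma_i)=(i,i+1)$, and $P_n(D)=\ker\pi$. $H_\beta=\langle P_n(D),\beta\rangle$ is the subgroup generated by $P_n(D)$ and $\beta$. A group is bi-orderable if it admits a strict total ordering invariant under both left and right multiplication. *)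

(* Defs.v *)
(* braid groups via their Artin presentation,
   represented as words modulo the congruence generated by the relations. *)
From mathcomp Require Import all_boot.
Set Implicit Arguments. Unset Strict Implicit. Unset Printing Implicit Defensive.

(* A letter (i, true) is sigma_i, (i, false) is sigma_i^{-1}. *)
Definition letter := (nat * bool)%type.
Definition word := seq letter.

Definition valid_word (n : nat) (w : word) : bool :=
  all (fun g : letter => (0 < g.1) && (g.1 < n)) w.

(* Group operations on words: product = concatenation, identity = [::],
   inverse = reversed word with inverted letters. *)
Definition winv (w : word) : word := rev (map (fun g : letter => (g.1, ~~ g.2)) w).

Inductive beq (n : nat) : word -> word -> Prop :=
| beq_refl w : beq n w w
| beq_sym u v : beq n u v -> beq n v u
| beq_trans u v w : beq n u v -> beq n v w -> beq n u w
| beq_ctx a u v b : valid_word n a -> valid_word n b ->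
    beq n u v -> beq n (a ++ u ++ b) (a ++ v ++ b)
| beq_free i s : (0 < i < n)%N -> beq n [:: (i, s); (i, ~~ s)] [::]
| beq_comm i j : (0 < i < n)%N -> (0 < j < n)%N ->
    (i + 2 <= j)%N \/ (j + 2 <= i)%N ->
    beq n [:: (i, true); (j, true)] [:: (j, true); (i, true)]
| beq_braid i : (0 < i)%N -> (i.+1 < n)%N ->
    beq n [:: (i, true); (i.+1, true); (i, true)]
          [:: (i.+1, true); (i, true); (i.+1, true)].

Definition transp (a b : nat) : nat -> nat :=
  fun x => if x == a then b else if x == b then a else x.

(* The permutation homomorphism pi : B_n(D) -> S_n, with pi(sigma_i) = (i,i+1),
   permutations of {1..n} viewed as functions nat -> nat fixing everything else. *)
Definition perm_of_word (w : word) : nat -> nat :=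
  foldr (fun (g : letter) f => transp g.1 g.1.+1 \o f) id w.

Definition is_transposition (n : nat) (f : nat -> nat) : Prop :=
  exists a b, [/\ (1 <= a)%N, (a < b)%N, (b <= n)%N & forall x, f x = transp a b x].

Definition pure (n : nat) (w : word) : Prop :=
  valid_word n w /\ forall x, perm_of_word w x = x.

Inductive Hsub (n : nat) (beta : word) : word -> Prop :=
| H_pure w : pure n w -> Hsub n beta w
| H_beta : Hsub n beta beta
| H_inv w : Hsub n beta w -> Hsub n beta (winv w)
| H_mul u v : Hsub n beta u -> Hsub n beta v -> Hsub n beta (u ++ v)
| H_beq u v : Hsub n beta u -> beq n u v -> Hsub n beta v.

Definition biorderable (n : nat) (H : word -> Prop) : Prop :=
  exists lt : word -> word -> Prop,
  [/\ (forall u u' v v', H u -> H v -> beq n u u' -> beq n v v' -> lt u v -> lt u' v'),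
      (forall u, H u -> ~ lt u u),
      (forall u v w, H u -> H v -> H w -> lt u v -> lt v w -> lt u w),
      (forall u v, H u -> H v -> [\/ beq n u v, lt u v | lt v u])
    & (forall u v g, H u -> H v -> H g -> lt u v ->
         lt (g ++ u) (g ++ v) /\ lt (u ++ g) (v ++ g))].

(* Main.v *)
Require Import Defs.
From mathcomp Require Import all_boot.
From Stdlib Require Import ZArith Lia.
From mathcomp Require Import all_boot zify.
Set Implicit Arguments. Unset Strict Implicit. Unset Printing Implicit Defensive.

Definition sw (g : letter) := transp g.1 g.1.+1.
Fixpoint Qw (w : word) : nat -> nat :=
  match w with [::] => id | g :: w' => fun x => Qw w' (sw g x) end.
Definition ind (g : letter) (p q : nat) : Z :=
  if ((p == g.1) && (q == g.1.+1)) || ((p == g.1.+1) && (q == g.1))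
  then (if g.2 then 1 else -1)%Z else 0%Z.
Fixpoint Lw (w : word) (p q : nat) : Z :=
  match w with [::] => 0%Z | g :: w' => (ind g p q + Lw w' (sw g p) (sw g q))%Z end.

Lemma Qw_cat u v x : Qw (u ++ v) x = Qw v (Qw u x).
Proof. by elim: u x => //= g u IH x. Qed.
Lemma Lw_cat u v p q : Lw (u ++ v) p q = (Lw u p q + Lw v (Qw u p) (Qw u q))%Z.
Proof. elim: u p q => //= g u IH p q. rewrite IH; lia. Qed.

Ltac noif t := lazymatch t with context[if _ then _ else _] => fail | _ => idtac end.
Ltac crush := repeat (match goal with
 | |- context[ (?a == ?b) ] => noif a; noif b; let E := fresh "E" in case: (@eqP nat a b) => E /=; try (exfalso; lia)
 end); try lia.

Lemma beq_inv n u v : beq n u v ->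
  (forall x, Qw u x = Qw v x) /\ (forall p q, Lw u p q = Lw v p q).
Proof.
elim => {u v}.
- by [].
- move=> u v _ [H1 H2]; split => *; [by rewrite H1 | by rewrite H2].
- move=> u v w _ [H1 H2] _ [H3 H4]; split => *; [by rewrite H1 H3 | by rewrite H2 H4].
- move=> a u v b _ _ _ [H1 H2]; split => [x|p q]; first by rewrite !Qw_cat H1.
  rewrite !Lw_cat !H1 H2; lia.
- move=> i s _; split => [x|p q] /=; rewrite /sw /ind /transp /=; case: s => /=; crush.
- move=> i j _ _ H; split => [x|p q] /=; rewrite /sw /ind /transp /=; crush.
- move=> i _ _; split => [x|p q] /=; rewrite /sw /ind /transp /=; crush.
Qed.

Lemma winv_cat u v : winv (u ++ v) = winv v ++ winv u.
Proof. by rewrite /winv map_cat rev_cat. Qed.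
Lemma winv_cons g u : winv (g :: u) = winv u ++ [:: (g.1, ~~ g.2)].
Proof. by rewrite /winv /= rev_cons cats1. Qed.
Lemma winvK u : winv (winv u) = u.
Proof. elim: u => //= g u IH. by rewrite winv_cons winv_cat IH /= negbK; case: g. Qed.
Lemma valid_cat n u v : valid_word n (u ++ v) = valid_word n u && valid_word n v.
Proof. exact: all_cat. Qed.
Lemma valid_winv n u : valid_word n (winv u) = valid_word n u.
Proof. by rewrite /valid_word /winv all_rev all_map. Qed.

Lemma beq_valid n u v : beq n u v -> valid_word n u = valid_word n v.
Proof.
elim => //.
- by move=> u0 v0 w _ -> _ ->.
- by move=> a u0 v0 b _ _ _ H; rewrite !valid_cat H.
- by move=> i s Hi; rewrite /valid_word /= Hi.
- by move=> i j Hi Hj _; rewrite /valid_word /= Hi Hj.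
- move=> i H1 H2; rewrite /valid_word /= H1 H2 /=.
  have -> : i < n by lia.
  by [].
Qed.

Lemma beq_cat n u u' v v' : valid_word n u' -> valid_word n v ->
  beq n u u' -> beq n v v' -> beq n (u ++ v) (u' ++ v').
Proof.
move=> Vu Vv H1 H2; apply: (beq_trans (v := u' ++ v)).
- exact: (@beq_ctx n [::] u u' v isT Vv H1).
- have := @beq_ctx n u' v v' [::] Vu isT H2; by rewrite !cats0.
Qed.

Lemma beq_cancel n u : valid_word n u -> beq n (u ++ winv u) [::].
Proof.
elim: u => [|g u IH] /=; first by move=> _; apply: beq_refl.
move=> /andP [Hg Vu].
rewrite winv_cons.
have Vg : valid_word n [:: g] by rewrite /valid_word /= Hg.
have Vg' : valid_word n [:: (g.1, ~~ g.2)] by rewrite /valid_word /= Hg.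
apply: (beq_trans (v := [:: g] ++ [::] ++ [:: (g.1, ~~ g.2)])).
- have := beq_ctx Vg Vg' (IH Vu). by rewrite /= catA.
- case: g Hg {Vg Vg'} => i s Hg /=; exact: beq_free.
Qed.

Lemma beq_cancel' n u : valid_word n u -> beq n (winv u ++ u) [::].
Proof. move=> V; have := @beq_cancel n (winv u); rewrite winvK valid_winv; exact. Qed.

Lemma pw_cat u v x : perm_of_word (u ++ v) x = perm_of_word u (perm_of_word v x).
Proof. by elim: u => //= g u ->. Qed.

Lemma transpK a b x : transp a b (transp a b x) = x.
Proof. rewrite /transp; crush. Qed.

Lemma perm_winv u x : perm_of_word (winv u) (perm_of_word u x) = x.
Proof.
elim: u x => //= g u IH x.
by rewrite winv_cons pw_cat /= transpK IH.
Qed.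

Lemma Hsub_valid n beta w : valid_word n beta -> Hsub n beta w -> valid_word n w.
Proof.
move=> Vb; elim => //.
- by move=> u [].
- by move=> u _; rewrite valid_winv.
- by move=> u v _ Hu _ Hv; rewrite valid_cat Hu Hv.
- by move=> u v _ Hu /beq_valid <-.
Qed.

Definition cj (w u : word) := winv w ++ u ++ w.

Lemma cj_beq n w u v : valid_word n w -> beq n u v -> beq n (cj w u) (cj w v).
Proof. move=> Vw E; apply: beq_ctx => //; by rewrite valid_winv. Qed.

Lemma cj_cat n w u v : valid_word n w -> valid_word n u -> valid_word n v ->
  beq n (cj w u ++ cj w v) (cj w (u ++ v)).
Proof.
move=> Vw Vu Vv.
have -> : cj w u ++ cj w v = (winv w ++ u) ++ (w ++ winv w) ++ (v ++ w)
  by rewrite /cj -!catA.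
have -> : cj w (u ++ v) = (winv w ++ u) ++ [::] ++ (v ++ w) by rewrite /cj -!catA.
apply: beq_ctx; first by rewrite valid_cat valid_winv Vw Vu.
- by rewrite valid_cat Vw Vv.
- exact: beq_cancel.
Qed.

Lemma uncj n w u : valid_word n w -> valid_word n u -> beq n (w ++ cj w u ++ winv w) u.
Proof.
move=> Vw Vu.
have -> : w ++ cj w u ++ winv w = (w ++ winv w) ++ (u ++ (w ++ winv w))
  by rewrite /cj -!catA.
have V1 : valid_word n (u ++ (w ++ winv w)) by rewrite valid_cat Vu valid_cat Vw valid_winv Vw.
have := @beq_cat n (w ++ winv w) [::] (u ++ (w ++ winv w)) u isT V1 (beq_cancel Vw).
apply.
have V2 : valid_word n (w ++ winv w) by rewrite valid_cat valid_winv Vw.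
have := @beq_cat n u u (w ++ winv w) [::] Vu V2 (beq_refl _ _) (beq_cancel Vw).
by rewrite cats0.
Qed.

Lemma Hconj n beta w u : valid_word n w -> valid_word n beta ->
  Hsub n (w ++ beta ++ winv w) u -> Hsub n beta (cj w u).
Proof.
move=> Vw Vb.
have Vb' : valid_word n (w ++ beta ++ winv w) by rewrite !valid_cat valid_winv Vw Vb.
elim.
- move=> u0 [Vu Pu]; apply: H_pure; split.
  + by rewrite /cj !valid_cat valid_winv Vw Vu.
  + by move=> x; rewrite /cj !pw_cat Pu perm_winv.
- apply: H_beq (H_beta _ _) _; apply: beq_sym.
  have -> : cj w (w ++ beta ++ winv w) = (winv w ++ w) ++ (beta ++ (winv w ++ w))
    by rewrite /cj -!catA.
  have V1 : valid_word n (beta ++ (winv w ++ w)) by rewrite valid_cat Vb valid_cat valid_winv Vw.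
  have := @beq_cat n (winv w ++ w) [::] (beta ++ (winv w ++ w)) beta isT V1 (beq_cancel' Vw).
  move=> /= H; apply: H.
  have V2 : valid_word n (winv w ++ w) by rewrite valid_cat valid_winv Vw.
  have := @beq_cat n beta beta (winv w ++ w) [::] Vb V2 (beq_refl _ _) (beq_cancel' Vw).
  by rewrite cats0.
- move=> u0 _ IH; have := H_inv IH.
  by rewrite /cj !winv_cat winvK catA.
- move=> u0 v0 Hu IHu Hv IHv; apply: H_beq (H_mul IHu IHv) _.
  apply: cj_cat => //; [exact: Hsub_valid Vb' Hu | exact: Hsub_valid Vb' Hv].
- move=> u0 v0 _ IH E; apply: H_beq IH _; exact: cj_beq.
Qed.

Lemma transport n beta w : valid_word n w -> valid_word n beta ->
  biorderable n (Hsub n beta) -> biorderable n (Hsub n (w ++ beta ++ winv w)).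
Proof.
move=> Vw Vb [lt [Hc Hirr Htr Htot Hinv]].
have Vb' : valid_word n (w ++ beta ++ winv w) by rewrite !valid_cat valid_winv Vw Vb.
have HC := @Hconj n beta w _ Vw Vb.
have HV := @Hsub_valid n _ _ Vb'.
exists (fun u v => lt (cj w u) (cj w v)); split.
- move=> u u' v v' Hu Hv Eu Ev; apply: Hc; [exact: HC|exact: HC|exact: cj_beq|exact: cj_beq].
- move=> u Hu; exact: Hirr (HC _ Hu).
- move=> u v x Hu Hv Hx; exact: Htr (HC _ Hu) (HC _ Hv) (HC _ Hx).
- move=> u v Hu Hv; case: (Htot _ _ (HC _ Hu) (HC _ Hv)) => [E|L|L].
  + apply: Or31; apply: beq_trans (beq_sym (uncj Vw (HV _ Hu))) _.
    apply: beq_trans (uncj Vw (HV _ Hv)).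
    apply: beq_ctx => //; by rewrite valid_winv.
  + exact: Or32.
  + exact: Or33.
- move=> u v g Hu Hv Hg L.
  have [L1 L2] := Hinv _ _ _ (HC _ Hu) (HC _ Hv) (HC _ Hg) L.
  have Vu := HV _ Hu; have Vv := HV _ Hv; have Vg := HV _ Hg.
  split.
  + apply: Hc L1.
    * exact: H_mul (HC _ Hg) (HC _ Hu).
    * exact: H_mul (HC _ Hg) (HC _ Hv).
    * exact: cj_cat.
    * exact: cj_cat.
  + apply: Hc L2.
    * exact: H_mul (HC _ Hu) (HC _ Hg).
    * exact: H_mul (HC _ Hv) (HC _ Hg).
    * exact: cj_cat.
    * exact: cj_cat.
Qed.

Lemma core n beta : 2 < n -> valid_word n beta ->
  (forall x, perm_of_word beta x = transp 1 2 x) -> ~ biorderable n (Hsub n beta).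
Proof.
move=> h2 Vb Pb [lt [Hc Hirr Htr Htot Hinv]].
have h1 : 1 < n by lia.
pose A : letter := (1, true). pose B : letter := (2, true).
have Vs1 : valid_word n [:: A] by rewrite /valid_word /= h1.
have Hs1 : Hsub n beta [:: A].
  have Pp : pure n (beta ++ [:: (1, false)]).
    split; first by rewrite valid_cat Vb /valid_word /= h1.
    by move=> x; rewrite pw_cat /= Pb transpK.
  apply: H_beq (H_mul (H_inv (H_pure _ Pp)) (H_beta _ _)) _.
  have -> : winv (beta ++ [:: (1, false)]) = [:: A] ++ winv beta
    by rewrite winv_cat.
  rewrite -catA.
  have Vw : valid_word n (winv beta ++ beta) by rewrite valid_cat valid_winv Vb.
  have := @beq_cat n [:: A] [:: A] (winv beta ++ beta) [::] Vs1 Vw (beq_refl _ _) (beq_cancel' Vb).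
  by rewrite cats0.
have Hs22 : Hsub n beta [:: B; B].
  apply: H_pure; split; first by rewrite /valid_word /= h2.
  by move=> x; rewrite /= transpK.
pose x := [:: A] ++ [:: B; B]. pose y := [:: B; B] ++ [:: A].
have Hx : Hsub n beta x by exact: H_mul.
have Hy : Hsub n beta y by exact: H_mul.
have V2 : valid_word n [:: A; B] by rewrite /valid_word /= h1 h2.
have V1 : valid_word n [:: B] by rewrite /valid_word /= h2.
have V3 : valid_word n [:: B; A] by rewrite /valid_word /= h1 h2.
have V4 : valid_word n [:: B; A; B] by rewrite /valid_word /= h1 h2.
have Br : beq n [:: A; B; A] [:: B; A; B] by exact: (@beq_braid n 1 isT h2).
have E : beq n (x ++ x) (y ++ y).
  apply: (beq_trans (v := [:: A; B; A; B; A; B])).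
    exact: (@beq_ctx n [:: A; B] _ _ [:: B] V2 V1 (beq_sym Br)).
  apply: (beq_trans (v := [:: B; A; B; B; A; B])).
    exact: (@beq_ctx n [::] _ _ [:: B; A; B] isT V4 Br).
  apply: (beq_trans (v := [:: B; A; B; A; B; A])).
    exact: (@beq_ctx n [:: B; A; B] _ _ [::] V4 isT (beq_sym Br)).
  apply: beq_sym.
  exact: (@beq_ctx n [:: B] _ _ [:: B; A] V1 V3 (beq_sym Br)).
have NE : ~ beq n x y.
  move=> /beq_inv [_ /(_ 1 3)] H; vm_compute in H; discriminate.
have key : forall u v, Hsub n beta u -> Hsub n beta v -> lt u v ->
    lt (u ++ u) (v ++ v).
  move=> u v Hu Hv L.
  have [L1 _] := Hinv _ _ _ Hu Hv Hu L.
  have [_ L2] := Hinv _ _ _ Hu Hv Hv L.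
  exact: Htr (H_mul Hu Hu) (H_mul Hu Hv) (H_mul Hv Hv) L1 L2.
case: (Htot _ _ Hx Hy) => [//|L|L].
- have := key _ _ Hx Hy L.
  move/(Hc _ (y ++ y) _ (y ++ y) (H_mul Hx Hx) (H_mul Hy Hy) E (beq_refl _ _)).
  exact: Hirr (H_mul Hy Hy).
- have := key _ _ Hy Hx L.
  move/(Hc _ (y ++ y) _ (y ++ y) (H_mul Hy Hy) (H_mul Hx Hx) (beq_refl _ _) E).
  exact: Hirr (H_mul Hy Hy).
Qed.

Lemma red n k : 2 < n -> forall a b beta, a + b <= k -> 1 <= a -> a < b -> b <= n ->
  valid_word n beta -> (forall x, perm_of_word beta x = transp a b x) ->
  ~ biorderable n (Hsub n beta).
Proof.
move=> hn; elim: k => [|k IH] a b beta hk ha hab hb Vb Pb; first lia.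
have [a1|a1] := leqP a 1.
- have ea : a = 1 by lia.
  subst a.
  have [b2|b2] := leqP b 2.
  + have eb : b = 2 by lia. subst b. exact: core.
  + pose g : word := [:: (b.-1, true)].
    have Vg : valid_word n g.
      rewrite /valid_word /= andbT; apply/andP; split; lia.
    move=> /(transport Vg Vb); apply: (IH 1 b.-1) => //; try lia.
    * by rewrite !valid_cat valid_winv Vg Vb.
    * move=> x; rewrite !pw_cat /g /winv /= Pb /transp; crush.
- pose g : word := [:: (a.-1, true)].
  have Vg : valid_word n g.
    rewrite /valid_word /= andbT; apply/andP; split; lia.
  move=> /(transport Vg Vb); apply: (IH a.-1 b) => //; try lia.
  * by rewrite !valid_cat valid_winv Vg Vb.
  * move=> x; rewrite !pw_cat /g /winv /= Pb /transp; crush.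
Qed.

Theorem mainTheorem8 (n : nat) (beta : word) :
  (3 <= n)%N -> valid_word n beta ->
  is_transposition n (perm_of_word beta) ->
  ~ biorderable n (Hsub n beta).
Proof.
move=> hn Vb [a [b [ha hab hb Pb]]].
exact: (@red n (a + b) hn a b beta (leqnn _) ha hab hb Vb Pb).
Qed.
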